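(* Consider an interface between two cells $i$ and $j$ in a two-point flux finite-volume discretization of incompressible, immiscible multiphase flow with phases $\ell \in \{1,\dots,n_p\}$. Let $T>0$ be the interface transmissibility, and for each phase $\ell$ let $\lambda_{\ell,i}\ge 0$ and $\lambda_{\ell,j}\ge 0$ be the (fixed) phase mobilities in cells $i$ and $j$, $g_\ell$ a fixed phase gravity potential difference across the interface, and $D_\ell>0$ a fixed normalization constant. Treat the phase pressure differences $\Delta p_1,\dots,\Delta p_{n_p}$ across the interface as variables, and set $\Delta\Phi_\ell = \Delta p_\ell - g_\ell$. For a scaling coefficient $\gamma_\ell\in\mathbb{R}$ define $$\beta_\ell = \frac12 + \frac{1}{\pi}\arctan\!\Big(\gamma_\ell\,\frac{\Delta\Phi_\ell}{D_\ell}\Big),\qquad \lambda_\ell^{WA} = \beta_\ell\,\lambda_{\ell,i} + (1-\beta_\ell)\,\lambda_{\ell,j},$$ and the total velocity $$u_t = T\sum_{m=1}^{n_p} \lambda_m^{WA}\,\Delta\Phi_m .$$ If $\gamma_\ell \ge 0$, then $\dfrac{\partial u_t}{\partial \Delta p_\ell} \ge 0$.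
   Context: This is the weighted-averaging (WA) treatment of flow mobilities in a total velocity formulation. In the paper, $D_\ell = |g_{ij,ref}| + |c_{\ell,ref}|$ where $g_{ij,ref}=\max_\ell(\rho_{\ell,s})\, g\,\Delta z_{ij}$ is a reference gravity potential difference (with surface phase densities $\rho_{\ell,s}$) and $c_{\ell,ref}=p_{\ell,cap}(0.8)-p_{\ell,cap}(0.2)$ a reference capillary pressure difference; both are constants, assumed here to have positive sum. Differences are taken as $\Delta\bullet = \bullet_i - \bullet_j$. The mobilities are held fixed (they depend on saturations, not on pressures). *)

(* Defs.v *)
From Stdlib Require Import Reals Lra.
From Coquelicot Require Import Coquelicot.
Open Scope R_scope.

(* finite sum over m = 0, ..., n-1 (phases indexed 0..np-1) *)
Fixpoint sum_lt (n : nat) (f : nat -> R) : R :=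
  match n with
  | O => 0
  | S k => sum_lt k f + f k
  end.

Definition upd (dp : nat -> R) (l : nat) (x : R) : nat -> R :=
  fun m => if Nat.eqb m l then x else dp m.

Definition beta (gam D dPhi : R) : R :=
  / 2 + / PI * atan (gam * dPhi / D).

Definition lamWA (gam D dPhi lam_i lam_j : R) : R :=
  beta gam D dPhi * lam_i + (1 - beta gam D dPhi) * lam_j.

Definition u_t (np : nat) (T : R) (lam_i lam_j g D gam : nat -> R)
  (dp : nat -> R) : R :=
  T * sum_lt np (fun m =>
        lamWA (gam m) (D m) (dp m - g m) (lam_i m) (lam_j m) * (dp m - g m)).

(* Main.v *)
Require Import Defs.
From Stdlib Require Import Reals Lra Lia.
From Coquelicot Require Import Coquelicot.
Open Scope R_scope.

Lemma cst (c x : R) : is_derive (fun _ : R => c) x 0.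
Proof. auto_derive; auto. Qed.
Lemma dplus (f g : R -> R) x a b : is_derive f x a -> is_derive g x b -> is_derive (fun y => f y + g y) x (a+b).
Proof. intros. now apply (is_derive_plus f g). Qed.
Lemma dmult (f g : R -> R) x a b : is_derive f x a -> is_derive g x b -> is_derive (fun y => f y * g y) x (a * g x + f x * b).
Proof. intros. apply (is_derive_mult f g); auto. intros; apply Rmult_comm. Qed.

Lemma deq (f : R -> R) (x a b : R) : is_derive f x a -> a = b -> is_derive f x b.
Proof. intros H ->; exact H. Qed.

Lemma sum_deriv (K : nat -> R -> R) (l : nat) (x0 d : R) :
  is_derive (K l) x0 d -> (forall m x, m <> l -> K m x = K m x0) ->
  forall n, is_derive (fun x => sum_lt n (fun m => K m x)) x0 (if Nat.ltb l n then d else 0).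
Proof.
  intros Hd Hc n. induction n as [|n IH].
  - simpl. apply cst.
  - simpl. destruct (Nat.eq_dec n l) as [->|Hne].
    + rewrite Nat.ltb_irrefl in IH. replace (Nat.ltb l (S l)) with true by (symmetry; apply Nat.ltb_lt; lia).
      replace d with (0 + d) by ring. apply dplus; auto.
    + apply (is_derive_ext (fun x => sum_lt n (fun m => K m x) + K n x0)).
      { intros; rewrite (Hc n t Hne); reflexivity. }
      assert (E : (if Nat.ltb l (S n) then d else 0) = (if Nat.ltb l n then d else 0) + 0).
      { destruct (Nat.ltb_spec l n), (Nat.ltb_spec l (S n)).
        - simpl; ring.
        - lia.
        - exfalso; apply Hne; lia.
        - simpl; ring. }
      rewrite E. apply dplus; auto. apply cst.
Qed.

Lemma H_deriv (gm Dm li lj gg x0 : R) (HD : 0 < Dm) :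
  is_derive (fun x => lamWA gm Dm (x - gg) li lj * (x - gg)) x0
   (lamWA gm Dm (x0 - gg) li lj +
    (/ PI * (gm / Dm * / (1 + (gm * (x0 - gg) / Dm)²))) * (li - lj) * (x0 - gg)).
Proof.
  unfold lamWA, beta.
  assert (Hb : is_derive (fun x => / 2 + / PI * atan (gm * (x - gg) / Dm)) x0
                 (/ PI * (gm / Dm * / (1 + (gm * (x0 - gg) / Dm)²)))).
  { replace (/ PI * (gm / Dm * / (1 + (gm * (x0 - gg) / Dm)²))) with
      (0 + / PI * (gm / Dm * / (1 + (gm * (x0 - gg) / Dm)²))) by ring.
    apply dplus; [apply cst|].
    assert (Hi : is_derive (fun x => gm * (x - gg) / Dm) x0 (gm / Dm)).
    { auto_derive; [auto| field; lra]. }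
    pose proof (is_derive_comp atan (fun x => gm * (x - gg) / Dm) x0 _ _ (is_derive_atan _) Hi) as Ha.
    pose proof (dmult (fun _ => / PI) (fun x => atan (gm * (x - gg) / Dm)) x0 _ _ (cst _ _) Ha) as Hm.
    apply (deq _ _ _ _ Hm). unfold scal; simpl; unfold mult; simpl. ring. }
  set (bf := fun x => / 2 + / PI * atan (gm * (x - gg) / Dm)) in *.
  set (b' := / PI * (gm / Dm * / (1 + (gm * (x0 - gg) / Dm)²))) in *.
  change (is_derive (fun x => (bf x * li + (1 - bf x) * lj) * (x - gg)) x0
    ((bf x0 * li + (1 - bf x0) * lj) + b' * (li - lj) * (x0 - gg))).
  apply (is_derive_ext (fun x => (bf x * (li - lj) + lj) * (x - gg))).
  { intros t. change ((bf t * (li - lj) + lj) * (t - gg) = (bf t * li + (1 - bf t) * lj) * (t - gg) :> R). ring. }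
  replace ((bf x0 * li + (1 - bf x0) * lj) + b' * (li - lj) * (x0 - gg)) with
    ((b' * (li - lj) + 0) * (x0 - gg) + (bf x0 * (li - lj) + lj) * (1 - 0)) by ring.
  apply (dmult (fun x => bf x * (li - lj) + lj) (fun x => x - gg)).
  - apply dplus; [|apply cst].
    pose proof (dmult bf (fun _ => li - lj) x0 _ _ Hb (cst _ _)) as Hm.
    replace (b' * (li - lj)) with (b' * (li - lj) + bf x0 * 0) by ring. exact Hm.
  - apply (deq _ _ _ _ (dplus (fun x => x) (fun _ => - gg) x0 _ _ (is_derive_id _) (cst _ _))).
    simpl. unfold one; simpl. ring.
Qed.
Lemma t_frac t : t / (1 + t²) = sin (atan t) * cos (atan t).
Proof.
  assert (Hc : cos (atan t) <> 0) by (rewrite cos_atan; apply Rgt_not_eq;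
    apply Rdiv_lt_0_compat; [lra| apply sqrt_lt_R0; pose proof (Rle_0_sqr t); lra]).
  assert (Hs : sin (atan t) = t * cos (atan t)).
  { pose proof (tan_atan t) as H. unfold tan in H. set (a := atan t) in *. rewrite <- H. field. auto. }
  rewrite Hs, cos_atan.
  assert (Hp : 0 < 1 + t²) by (pose proof (Rle_0_sqr t); lra).
  assert (Hq : sqrt (1 + t²) * sqrt (1 + t²) = 1 + t²) by (apply sqrt_sqrt; lra).
  assert (sqrt (1 + t²) <> 0) by (apply Rgt_not_eq, sqrt_lt_R0; lra).
  replace (t * (1 / sqrt (1 + t²)) * (1 / sqrt (1 + t²))) with (t / (sqrt (1 + t²) * sqrt (1 + t²))) by (field; auto). rewrite Hq. reflexivity.
Qed.

Lemma key_pos t : 0 <= PI / 2 + atan t + t / (1 + t²) /\ 0 <= PI / 2 - atan t - t / (1 + t²).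
Proof.
  rewrite t_frac. set (a := atan t).
  assert (Hb : - PI / 2 < a < PI / 2) by apply atan_bound.
  assert (E : sin a * cos a = sin (2 * a) / 2) by (rewrite sin_2a; field).
  rewrite E. split.
  - set (b := a + PI/2).
    assert (sin (2 * a) = - sin (2 * b)).
    { unfold b. replace (2 * (a + PI/2)) with (2 * a + PI) by field. rewrite neg_sin. ring. }
    assert (sin (2*b) < 2*b) by (apply sin_lt_x; unfold b; lra).
    unfold b in *. lra.
  - set (b := PI/2 - a).
    assert (sin (2 * a) = sin (2 * b)).
    { unfold b. replace (2 * (PI/2 - a)) with (PI - 2 * a) by field. rewrite sin_PI_x. auto. }
    assert (sin (2*b) < 2*b) by (apply sin_lt_x; unfold b; lra).
    unfold b in *. lra.
Qed.

Theorem mainTheorem1 (np : nat) (T : R) (lam_i lam_j g D gam : nat -> R)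
  (dp : nat -> R) (l : nat)
  (HT : 0 < T)
  (Hli : forall m, (m < np)%nat -> 0 <= lam_i m)
  (Hlj : forall m, (m < np)%nat -> 0 <= lam_j m)
  (HD : forall m, (m < np)%nat -> 0 < D m)
  (Hl : (l < np)%nat)
  (Hgam : 0 <= gam l) :
  ex_derive (fun x => u_t np T lam_i lam_j g D gam (upd dp l x)) (dp l) /\
  0 <= Derive (fun x => u_t np T lam_i lam_j g D gam (upd dp l x)) (dp l).
Proof.
  set (K := fun m x => lamWA (gam m) (D m) (upd dp l x m - g m) (lam_i m) (lam_j m) * (upd dp l x m - g m)).
  set (d := lamWA (gam l) (D l) (dp l - g l) (lam_i l) (lam_j l) +
    (/ PI * (gam l / D l * / (1 + (gam l * (dp l - g l) / D l)²))) * (lam_i l - lam_j l) * (dp l - g l)).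
  assert (HK : is_derive (K l) (dp l) d).
  { apply (is_derive_ext (fun x => lamWA (gam l) (D l) (x - g l) (lam_i l) (lam_j l) * (x - g l))).
    - intros t. unfold K, upd. rewrite Nat.eqb_refl. reflexivity.
    - apply H_deriv. apply HD; auto. }
  assert (HC : forall m x, m <> l -> K m x = K m (dp l)).
  { intros m x Hm. unfold K, upd. apply Nat.eqb_neq in Hm. rewrite Hm. reflexivity. }
  pose proof (sum_deriv K l (dp l) d HK HC np) as Hs.
  replace (Nat.ltb l np) with true in Hs by (symmetry; apply Nat.ltb_lt; auto).
  pose proof (dmult (fun _ => T) _ _ _ _ (cst T (dp l)) Hs) as Hu.
  assert (Hu' : is_derive (fun x => u_t np T lam_i lam_j g D gam (upd dp l x)) (dp l) (T * d)).
  { apply (deq _ _ _ _ Hu); ring. }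
  split; [eexists; exact Hu'|].
  replace (Derive (fun x => u_t np T lam_i lam_j g D gam (upd dp l x)) (dp l)) with (T * d) by (symmetry; apply is_derive_unique; exact Hu').
  apply Rmult_le_pos; [lra|].
  assert (HDl : 0 < D l) by auto.
  set (y := dp l - g l) in *.
  set (t := gam l * y / D l).
  assert (Ht : gam l / D l * / (1 + t²) * y = t / (1 + t²)).
  { unfold t. field. split; [lra|]. pose proof (Rle_0_sqr (gam l * y / D l)). lra. }
  assert (Hd : d = lam_i l * (/ PI * (PI / 2 + atan t + t / (1 + t²)))
                 + lam_j l * (/ PI * (PI / 2 - atan t - t / (1 + t²)))).
  { unfold d. fold t. unfold lamWA, beta. fold t.
    replace (/ PI * (gam l / D l * / (1 + t²)) * (lam_i l - lam_j l) * y)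
      with (/ PI * (gam l / D l * / (1 + t²) * y) * (lam_i l - lam_j l)) by ring.
    rewrite Ht. field. pose proof PI_RGT_0. pose proof (Rle_0_sqr t). split; lra. }
  rewrite Hd. destruct (key_pos t) as [H1 H2].
  assert (0 < / PI) by (apply Rinv_0_lt_compat, PI_RGT_0).
  pose proof (Hli l Hl). pose proof (Hlj l Hl).
  apply Rplus_le_le_0_compat; apply Rmult_le_pos; auto; apply Rmult_le_pos; lra.
Qed.
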